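(* Let $M$ be a magma satisfying the identities $(xy)z = xx$ and $x(yz) = xx$ for all $x,y,z\in M$. Then $M$ additionally satisfies $xx = yy$ for all $x,y\in M$ if and only if $M$ avoids the magma $2_{LZ}$ on $\{0,1\}$ with Cayley table \[ \begin{array}{c|cc} 2_{LZ} & 0 & 1 \\ \hline 0 & 0 & 0 \\ 1 & 1 & 1 \end{array} \] (i.e. $xy=x$ for all $x,y$).
   Context: A magma is a nonempty set with a binary operation, written by juxtaposition. A magma $M$ avoids a magma $F$ if no submagma of $M$ (nonempty subset closed under the operation, with the restricted operation) is isomorphic to $F$. *)

(* Defs.v *)
Record magma := Magma {
  carrier :> Type;
  op : carrier -> carrier -> carrier;
  elt : carrier  (* witness of nonemptiness *)
}.

Definition is_submagma (M : magma) (S : carrier M -> Prop) : Prop :=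
  (exists x, S x) /\ (forall x y, S x -> S y -> S (op M x y)).

Definition submagma_iso (F : Type) (opF : F -> F -> F)
  (M : magma) (S : carrier M -> Prop) : Prop :=
  exists f : F -> carrier M,
    (forall a, S (f a)) /\
    (forall a b, f a = f b -> a = b) /\
    (forall x, S x -> exists a, f a = x) /\
    (forall a b, f (opF a b) = op M (f a) (f b)).

Definition avoids (M : magma) (F : Type) (opF : F -> F -> F) : Prop :=
  ~ exists S, is_submagma M S /\ submagma_iso F opF M S.

(* The left-zero magma 2_LZ on {0,1} (= bool): x y = x. *)
Definition LZ2_op (x y : bool) : bool := x.

(* Main.v *)
Require Import Defs.
From Stdlib Require Import Classical.

Theorem mainTheorem1 (M : magma)
  (H1 : forall x y z : M, op M (op M x y) z = op M x x)
  (H2 : forall x y z : M, op M x (op M y z) = op M x x) :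
  (forall x y : M, op M x x = op M y y) <-> avoids M bool LZ2_op.
Proof.
  split.
  - intros He [S [_ [f [_ [Hinj [_ Hop]]]]]].
    assert (E : f true = f false).
    { pose proof (Hop true true) as A; pose proof (Hop false false) as B; unfold LZ2_op in A, B; rewrite A, B; apply He. }
    apply Hinj in E. discriminate.
  - intros Hav x y.
    destruct (classic (op M x x = op M y y)) as [h|hne]; [exact h|].
    exfalso. apply Hav.
    set (a := op M x x). set (b := op M y y).
    assert (Ha : forall z, op M a z = a) by (intro z; apply H1).
    assert (Hb : forall z, op M b z = b) by (intro z; apply H1).
    exists (fun z => z = a \/ z = b). split.
    + split. exists a; left; reflexivity.
      intros u v [->| ->] _; [left; apply Ha | right; apply Hb].
    + exists (fun t : bool => if t then a else b). split; [|split; [|split]].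
      * intros [|]; [left|right]; reflexivity.
      * intros [|] [|] E; try reflexivity; exfalso; apply hne; [exact E| symmetry; exact E].
      * intros z [->| ->]; [exists true|exists false]; reflexivity.
      * intros [|] c; unfold LZ2_op; [rewrite Ha|rewrite Hb]; reflexivity.
Qed.
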